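(* Let $R$ be a finite Frobenius ring and $\mathcal{P}_{\mathrm{hom}}=P_1\mid\cdots\mid P_M$ its homogeneous weight partition. Then the left Krawtchouk coefficients $\sum_{a\in P_m}\chi(ab)$ ($b\in R$, $1\le m\le M$), and hence the left $\chi$-dual partition of $\mathcal{P}_{\mathrm{hom}}$, do not depend on the choice of the generating character $\chi$ of $R$. The same holds for the right Krawtchouk coefficients $\sum_{a\in P_m}\chi(ba)$ and the right $\chi$-dual partition.
   Context: A character of $R$ is a group homomorphism $(R,+)\to\mathbb{C}^*$; the character group $\widehat{R}$ is an $R$-$R$-bimodule via $(r\cdot\chi)(v)=\chi(vr)$ and $(\chi\cdot r)(v)=\chi(rv)$. $R$ is Frobenius iff there is a character $\chi$ with $\widehat{R}=R\cdot\chi$ (equivalently $\widehat{R}=\chi\cdot R$); such $\chi$ is called a generating character. $\mathcal{P}_{\mathrm{hom}}$ is the partition of $R$ into level sets of the normalized homogeneous weight $\omega$ (the unique map $R\to\mathbb{R}$ with $\omega(0)=0$, $\omega(x)=\omega(y)$ whenever $Rx=Ry$, and $\sum_{y\in Rx}\omega(y)=|Rx|$ for $x\ne0$). For a partition $\mathcal{P}=P_1\mid\cdots\mid P_M$ of $R$, the left $\chi$-dual partition is defined by: $b\sim b'$ iff $\sum_{a\in P_m}\chi(ab)=\sum_{a\in P_m}\chi(ab')$ for all $m$; the right $\chi$-dual partition by: $b\sim b'$ iff $\sum_{a\in P_m}\chi(ba)=\sum_{a\in P_m}\chi(b'a)$ for all $m$. *)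

(* Defs.v *)
From mathcomp Require Import all_boot all_order all_algebra all_field.
Set Implicit Arguments. Unset Strict Implicit. Unset Printing Implicit Defensive.
Import Order.TTheory GRing.Theory Num.Theory.
Local Open Scope ring_scope.

Section Frob.
Variable R : finNzRingType.

Definition is_character (chi : R -> algC) : Prop :=
  (forall x y, chi (x + y) = chi x * chi y) /\ (forall x, chi x != 0).

Definition lact (r : R) (chi : R -> algC) : R -> algC := fun v => chi (v * r).

Definition generating_character (chi : R -> algC) : Prop :=
  is_character chi /\
  forall psi, is_character psi -> exists r : R, forall v, psi v = lact r chi v.

Definition frobenius : Prop := exists chi, generating_character chi.

Definition lprinc (x : R) : {set R} := [set r * x | r : R].

Definition normalized_homogeneous_weight (omega : R -> algC) : Prop :=
  [/\ forall x, omega x \is Num.real,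
      omega 0 = 0,
      forall x y, lprinc x = lprinc y -> omega x = omega y &
      forall x, x != 0 -> \sum_(y in lprinc x) omega y = #|lprinc x|%:R].

Definition level_partition (omega : R -> algC) : {set {set R}} :=
  [set [set a | omega a == omega c] | c : R].

Definition left_kraw (chi : R -> algC) (P : {set R}) (b : R) : algC :=
  \sum_(a in P) chi (a * b).
Definition right_kraw (chi : R -> algC) (P : {set R}) (b : R) : algC :=
  \sum_(a in P) chi (b * a).

(* left / right chi-dual partitions, given as equivalence relations on R *)
Definition left_dual_rel (chi : R -> algC) (PP : {set {set R}}) (b b' : R) : Prop :=
  forall P, P \in PP -> left_kraw chi P b = left_kraw chi P b'.
Definition right_dual_rel (chi : R -> algC) (PP : {set {set R}}) (b b' : R) : Prop :=
  forall P, P \in PP -> right_kraw chi P b = right_kraw chi P b'.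

End Frob.

(* Main.v *)
Require Import Defs.
From mathcomp Require Import all_boot all_order all_algebra all_field all_fingroup all_character.
Import Order.TTheory GRing.Theory Num.Theory.
Local Open Scope ring_scope.
Set Implicit Arguments. Unset Strict Implicit.

Lemma sep (R : finNzRingType) (x : R) : x != 0 ->
  exists psi, is_character psi /\ psi x != 1.
Proof.
move=> nx.
pose gT : finGroupType := FinRing.NzRing_to_finGroup R.
pose G := [set: gT].
have lin : forall i : Iirr G, 'chi_i \is a linear_char.
  by apply/char_abelianP; apply: FinRing.zmod_abelian.
have [/existsP [i Hi]|] := boolP [exists i : Iirr G, 'chi_i (x : gT) != 1].
  exists (fun r : R => 'chi_i (r : gT)); split => //; split.
    by move=> a b; rewrite -(lin_charM (lin i)) ?inE.
  by move=> a; rewrite lin_char_neq0 ?inE.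
rewrite negb_exists => /forallP H.
have := second_orthogonality_relation (x : gT) (group1 G).
rewrite class1G inE.
have -> : ((x : gT) == 1%g) = false by apply/negbTE.
rewrite mulr0n (eq_bigr (fun _ => 1)); last first.
  by move=> i _; move: (H i); rewrite negbK => /eqP ->; rewrite lin_char1 ?rmorph1 ?mulr1.
by rewrite sumr_const card_ord => /eqP; rewrite pnatr_eq0.
Qed.
Section S.
Variable R : finNzRingType.
Hypothesis sepH : forall x : R, x != 0 ->
  exists psi : R -> algC, is_character psi /\ psi x != 1.

Implicit Types c : R -> algC.

Lemma char0 c : is_character c -> c 0 = 1.
Proof.
case=> Ha Hn; have := Ha 0 0; rewrite addr0 => h.
by apply: (mulfI (Hn 0)); rewrite mulr1 -h.
Qed.

Lemma char_sub1 c a b : is_character c -> c a = c b -> c (a - b) = 1.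
Proof.
move=> H e; case: (H) => Ha Hn; apply: (mulIf (Hn b)).
by rewrite -Ha subrK mul1r.
Qed.

Lemma gen_right c : generating_character c ->
  forall x, (forall v, c (x * v) = 1) -> x = 0.
Proof.
case=> Hc Hg x Hx; apply/eqP; apply/negPn/negP => nx.
have [psi [Hpsi Hx1]] := sepH nx.
have [r Hr] := Hg psi Hpsi.
by move: Hx1; rewrite Hr /lact Hx eqxx.
Qed.

Lemma g_inj c : generating_character c ->
  forall r r', (forall v, c (r * v) = c (r' * v)) -> r = r'.
Proof.
move=> Hg r r' H; apply/eqP; rewrite -subr_eq0; apply/eqP.
apply: (gen_right Hg) => v; rewrite mulrBl; apply: char_sub1 => //.
exact: Hg.1.
Qed.

Lemma g_surj c : generating_character c ->
  forall psi, is_character psi -> exists w, forall v, psi v = c (w * v).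
Proof.
move=> Hg psi Hpsi.
pose Gc (r : R) : {ffun R -> algC} := [ffun v => c (r * v)].
pose Fc (r : R) : {ffun R -> algC} := [ffun v => c (v * r)].
pose s1 := [seq Gc r | r <- enum R].
pose s2 := [seq Fc r | r <- enum R].
have u1 : uniq s1.
  rewrite map_inj_uniq ?enum_uniq // => r r' e.
  apply: (g_inj Hg) => v; by rewrite -!(ffunE (fun v => c (_ * v))) -/(Gc r) e.
have sub : {subset s1 <= s2}.
  move=> f /mapP [r _ ->].
  have Hch : is_character (fun v => c (r * v)).
    split; first by move=> x y; rewrite mulrDr Hg.1.1.
    by move=> x; apply: Hg.1.2.
  have [r' Hr'] := Hg.2 _ Hch.
  apply/mapP; exists r'; first by rewrite mem_enum.
  by apply/ffunP => v; rewrite !ffunE Hr'.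
have [|_ e] := uniq_min_size u1 sub; first by rewrite !size_map.
have [r Hr] := Hg.2 _ Hpsi.
have : Fc r \in s1 by rewrite e; apply/mapP; exists r; rewrite ?mem_enum.
case/mapP => w _ ew; exists w => v.
by have := congr1 (fun f : {ffun R -> algC} => f v) ew; rewrite !ffunE Hr.
Qed.

Lemma gen_left c : generating_character c ->
  forall x, (forall v, c (v * x) = 1) -> x = 0.
Proof.
move=> Hg x Hx; apply/eqP; apply/negPn/negP => nx.
have [psi [Hpsi Hx1]] := sepH nx.
have [r Hr] := g_surj Hg Hpsi.
by move: Hx1; rewrite Hr Hx eqxx.
Qed.

Lemma f_inj c : generating_character c ->
  forall r r', (forall v, c (v * r) = c (v * r')) -> r = r'.
Proof.
move=> Hg r r' H; apply/eqP; rewrite -subr_eq0; apply/eqP.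
apply: (gen_left Hg) => v; rewrite mulrBr; apply: char_sub1 => //.
exact: Hg.1.
Qed.

Lemma left_unit c c' : generating_character c -> generating_character c' ->
  exists w w', [/\ forall v, c' v = c (w * v), w * w' = 1 & w' * w = 1].
Proof.
move=> H H'.
have [w Hw] := g_surj H H'.1.
have [w' Hw'] := g_surj H' H.1.
exists w, w'; split => //.
  apply/esym/(g_inj H) => v; by rewrite mul1r -mulrA -Hw -Hw'.
apply/esym/(g_inj H') => v; by rewrite mul1r -mulrA -Hw' -Hw.
Qed.

Lemma right_unit c c' : generating_character c -> generating_character c' ->
  exists u s, [/\ forall v, c' v = c (v * u), u * s = 1 & s * u = 1].
Proof.
move=> H H'.
have [u Hu] := H.2 _ H'.1.
have [s Hs] := H'.2 _ H.1.
rewrite /lact in Hu Hs.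
exists u, s; split => //.
  apply/esym/(f_inj H') => v; by rewrite mulr1 mulrA -Hs -Hu.
apply/esym/(f_inj H) => v; by rewrite mulr1 mulrA -Hu -Hs.
Qed.

End S.
Section W.
Variable R : finNzRingType.

Definition wprop (o : R -> algC) :=
  [/\ o 0 = 0, forall x y, lprinc x = lprinc y -> o x = o y &
      forall x, x != 0 -> \sum_(y in lprinc x) o y = #|lprinc x|%:R].

Lemma mem_lprinc (x : R) : x \in lprinc x.
Proof. by apply/imsetP; exists 1; rewrite ?mul1r. Qed.

Lemma lprinc_sub (x y : R) : y \in lprinc x -> lprinc y \subset lprinc x.
Proof.
case/imsetP => r _ ->; apply/subsetP => z /imsetP [t _ ->].
by apply/imsetP; exists (t * r); rewrite ?mulrA.
Qed.

Lemma wuniq o1 o2 : wprop o1 -> wprop o2 -> forall x, o1 x = o2 x.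
Proof.
case=> [z1 i1 s1] [z2 i2 s2] x.
move: {2}#|lprinc x| (leqnn #|lprinc x|) => n; elim: n x => [|n IH] x hx.
  by move: hx; rewrite leqn0 => /eqP/card0_eq/(_ x); rewrite mem_lprinc.
have [->|nx] := eqVneq x 0; first by rewrite z1 z2.
have key : \sum_(y in lprinc x) (o1 y - o2 y) = 0.
  by rewrite sumrB s1 // s2 // subrr.
rewrite (bigID (fun y => lprinc y == lprinc x)) /= in key.
rewrite [X in _ + X]big1 ?addr0 in key; last first.
  move=> y /andP [yx ne]; apply/eqP; rewrite subr_eq0; apply/eqP/IH.
  have pr : lprinc y \proper lprinc x by rewrite properEneq ne lprinc_sub.
  by rewrite -ltnS (leq_trans (proper_card pr)).
rewrite (eq_bigr (fun _ => o1 x - o2 x)) in key; last first.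
  by move=> y /andP [_ /eqP e]; rewrite (i1 _ _ e) (i2 _ _ e).
move: key; rewrite sumr_const => /eqP; rewrite mulrn_eq0 subr_eq0.
case/orP => [/eqP|/eqP //] c0.
have : x \in [pred y in lprinc x | lprinc y == lprinc x].
  by rewrite inE /= mem_lprinc eqxx.
by move/card0_eq: c0 => ->.
Qed.

Lemma omega_right (omega : R -> algC) u s :
  normalized_homogeneous_weight omega -> u * s = 1 -> s * u = 1 ->
  forall a, omega (a * u) = omega a.
Proof.
case=> _ z i sm us su.
have uinj : injective (fun y : R => y * u).
  by move=> y y' /(congr1 (fun z => z * s)); rewrite -!mulrA us !mulr1.
have lpM x : lprinc (x * u) = (fun y => y * u) @: lprinc x.
  apply/setP => t; apply/imsetP/imsetP => [[r _ ->]|[y /imsetP [r _ ->] ->]].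
    by exists (r * x); [apply/imsetP; exists r | rewrite mulrA].
  by exists r; rewrite ?mulrA.
have W : wprop (fun a => omega (a * u)).
  split; first by rewrite mul0r.
    by move=> x y e; apply: i; rewrite !lpM e.
  move=> x nx.
  have nxu : x * u != 0.
    by apply: contra nx => /eqP e; rewrite -[x]mulr1 -us mulrA e mul0r.
  rewrite -(big_imset (fun y => omega y)) /=; last by move=> ? ? _ _; apply: uinj.
  by rewrite -lpM sm // lpM card_imset.
have W' : wprop omega by split.
by move=> a; apply: (wuniq W W').
Qed.

Lemma omega_left (omega : R -> algC) w w' :
  normalized_homogeneous_weight omega -> w' * w = 1 ->
  forall a, omega (w * a) = omega a.
Proof.
case=> _ z i sm ww a; apply: i; apply/eqP; rewrite eqEsubset; apply/andP; split.
  by apply: lprinc_sub; apply/imsetP; exists w.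
by apply: lprinc_sub; apply/imsetP; exists w'; rewrite // mulrA ww mul1r.
Qed.

End W.

Theorem corollary5p3 (R : finNzRingType) (omega : R -> algC)
  (chi chi' : R -> algC) :
  frobenius R ->
  normalized_homogeneous_weight omega ->
  generating_character chi -> generating_character chi' ->
  [/\ (forall P b, P \in level_partition omega ->
          left_kraw chi P b = left_kraw chi' P b),
      (forall b b', left_dual_rel chi (level_partition omega) b b' <->
                    left_dual_rel chi' (level_partition omega) b b'),
      (forall P b, P \in level_partition omega ->
          right_kraw chi P b = right_kraw chi' P b) &
      (forall b b', right_dual_rel chi (level_partition omega) b b' <->
                    right_dual_rel chi' (level_partition omega) b b')].
Proof.
move=> _ Hw H H'.
have L : forall P b, P \in level_partition omega ->
          left_kraw chi P b = left_kraw chi' P b.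
  move=> P b /imsetP [c _ ->].
  have [w [w' [Hc _ ww]]] := left_unit (@sep R) H H'.
  have winj : injective (fun a : R => w * a).
    by move=> y y' /(congr1 (fun z => w' * z)); rewrite !mulrA ww !mul1r.
  rewrite /left_kraw (reindex_inj winj) /=.
  apply: eq_big => [a|a _]; first by rewrite !inE (omega_left Hw ww).
  by rewrite Hc mulrA.
have Rt : forall P b, P \in level_partition omega ->
          right_kraw chi P b = right_kraw chi' P b.
  move=> P b /imsetP [c _ ->].
  have [u [s [Hc us su]]] := right_unit (@sep R) H H'.
  have uinj : injective (fun a : R => a * u).
    by move=> y y' /(congr1 (fun z => z * s)); rewrite -!mulrA us !mulr1.
  rewrite /right_kraw (reindex_inj uinj) /=.
  apply: eq_big => [a|a _]; first by rewrite !inE (omega_right Hw us su).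
  by rewrite Hc mulrA.
split => //.
  move=> b b'; rewrite /left_dual_rel; split => E P HP.
    by rewrite -!L // E.
  by rewrite !L // E.
move=> b b'; rewrite /right_dual_rel; split => E P HP.
  by rewrite -!Rt // E.
by rewrite !Rt // E.
Qed.
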